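(* Let $G$ be a finite simple chordless Class 1 graph with maximum degree $\Delta$, let $\gamma$ be a proper $\Delta$-coloring and $\beta$ a proper $(\Delta+1)$-coloring of $G$, and let $\mathcal C$ be the set of proper $(\Delta+1)$-colorings of $G$ that are $K$-equivalent to $\beta$. Let $\alpha\in\mathcal C$ be minimal (as defined below), with missing colors $m_\alpha$ chosen so that $m_\alpha(x)=1$ if and only if $1$ is the only color missing at $x$. If $uv$ is an ugly edge in $\alpha$ and $X_u(\alpha,v)=(ux_0,ux_1,\dots,ux_p)$ with $x_0=v$ and $p\ge 1$, then $vx_p\notin E(G)$.
   Context: A (proper) $t$-coloring of $G$ is a map $\alpha:E(G)\to\{1,\dots,t\}$ with adjacent edges receiving different colors; $M(\alpha,j)$ is the set of edges of color $j$. $K_\alpha(c,d)$ is the subgraph formed by edges colored $c$ or $d$; a $K$-change swaps the two colors on one connected component of some $K_\alpha(c,d)$; two $t$-colorings are $K$-equivalent if one is obtained from the other by a finite sequence of $K$-changes using colors from $\{1,\dots,t\}$. Class 1 means $\chi'(G)=\Delta(G)$. A graph is chordless if no cycle $C$ has a chord (an edge joining two non-consecutive vertices of $C$). In a coloring in $\mathcal C$, an edge is bad if it lies in $M(\gamma,1)$ but is not colored $1$, and ugly if it is not in $M(\gamma,1)$ but is colored $1$. A coloring $\alpha\in\mathcal C$ is minimal if, among the colorings in $\mathcal C$ with the minimum number of bad edges, it has the minimum number of ugly edges. A color $c$ is missing at $x$ if no edge at $x$ has color $c$; $m_\alpha(x)$ is a fixed chosen missing color at $x$. An $\alpha$-fan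 at $u$ is a sequence of distinct edges $(ux_0,\dots,ux_p)$ at $u$ with $m_\alpha(x_i)=\alpha(ux_{i+1})$ for $0\le i<p$, and such that either $m_\alpha(x_p)$ is missing at $u$ or $m_\alpha(x_p)\in\{\alpha(ux_0),\dots,\alpha(ux_{p-1})\}$; $X_u(\alpha,v)$ denotes the unique such fan with $x_0=v$. *)

(* Defs.v *)
(* A finite simple graph is a symmetric irreflexive relation
   e : rel T on a finType T.  An edge coloring is a function a : T -> T -> nat,
   of which only the values a x y on edges (e x y) matter; properness requires
   a x y = a y x on edges, so it is really a map on unordered edges. *)
From mathcomp Require Import all_boot.
Set Implicit Arguments. Unset Strict Implicit. Unset Printing Implicit Defensive.

Section Defs.
Variable T : finType.
Variable e : rel T.

Definition deg (x : T) : nat := #|[set y | e x y]|.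
Definition maxdeg : nat := \max_(x : T) deg x.

Definition proper_col (t : nat) (a : T -> T -> nat) : Prop :=
  [/\ (forall x y, e x y -> 1 <= a x y <= t),
      (forall x y, e x y -> a x y = a y x) &
      (forall x y z, e x y -> e x z -> y != z -> a x y != a x z)].

Definition class1 : Prop :=
  (exists a, proper_col maxdeg a) /\
  (forall t a, proper_col t a -> maxdeg <= t).

Definition chordless : Prop :=
  forall s : seq T, uniq s -> 3 <= size s -> cycle e s ->
  forall x y, x \in s -> y \in s -> e x y -> next s x = y \/ next s y = x.

Definition kedge (a : T -> T -> nat) (c d : nat) : rel T :=
  fun x y => e x y && ((a x y == c) || (a x y == d)).

Definition kchange (a : T -> T -> nat) (c d : nat) (w : T) : T -> T -> nat :=
  fun x y =>
    if connect (kedge a c d) w x && ((a x y == c) || (a x y == d))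
    then (if a x y == c then d else c) else a x y.

Definition kstep (t : nat) (a b : T -> T -> nat) : Prop :=
  exists c d w, [/\ 1 <= c <= t, 1 <= d <= t, c != d &
    forall x y, e x y -> b x y = kchange a c d w x y].

Inductive kequiv (t : nat) (a : T -> T -> nat) : (T -> T -> nat) -> Prop :=
| kequiv_refl b : (forall x y, e x y -> a x y = b x y) -> kequiv t a b
| kequiv_step b c : kequiv t a b -> kstep t b c -> kequiv t a c.

Definition edge_set (P : T -> T -> bool) : {set {set T}} :=
  [set [set p.1; p.2] | p in [set p : T * T | e p.1 p.2 && P p.1 p.2]].

Definition bad (g a : T -> T -> nat) : T -> T -> bool :=
  fun x y => (g x y == 1) && (a x y != 1).
Definition ugly (g a : T -> T -> nat) : T -> T -> bool :=
  fun x y => (g x y != 1) && (a x y == 1).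

Definition nbad g a := #|edge_set (bad g a)|.
Definition nugly g a := #|edge_set (ugly g a)|.

Definition inC (b a : T -> T -> nat) : Prop :=
  proper_col maxdeg.+1 a /\ kequiv maxdeg.+1 b a.

Definition minimal (g b a : T -> T -> nat) : Prop :=
  inC b a /\
  forall a', inC b a' ->
    nbad g a <= nbad g a' /\ (nbad g a' = nbad g a -> nugly g a <= nugly g a').

Definition missing (a : T -> T -> nat) (x : T) (c : nat) : Prop :=
  forall y, e x y -> a x y != c.

Definition good_missing (t : nat) (a : T -> T -> nat) (m : T -> nat) : Prop :=
  forall x, [/\ 1 <= m x <= t, missing a x (m x) &
    (m x = 1 <-> (missing a x 1 /\
                  forall c, 1 <= c <= t -> missing a x c -> c = 1))].

(* xs = [x_0; ...; x_p] with x_0 = v describes the a-fan (u x_0, ..., u x_p) *)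
Definition is_fan (a : T -> T -> nat) (m : T -> nat) (u v : T) (xs : seq T)
  : Prop :=
  let p := (size xs).-1 in
  [/\ 0 < size xs, head v xs = v, uniq xs & all (e u) xs] /\
  [/\ (forall i, i < p -> m (nth v xs i) = a u (nth v xs i.+1)) &
      (missing a u (m (last v xs)) \/
       m (last v xs) \in map (a u) (take p xs))].

End Defs.

(* Main.v *)
Require Import Defs.
From mathcomp Require Import all_boot.
From mathcomp Require Import zify.

Set Implicit Arguments. Unset Strict Implicit. Unset Printing Implicit Defensive.

Section Helpers.
Variable T : finType.
Variable e : rel T.

Lemma connect_closed_in (r : rel T) (S : pred T) x y :
  (forall a b, S a -> r a b -> S b) -> S x -> connect r x y -> S y.
Proof.
move=> cl Sx /connectP [p pp ->]; elim: p x Sx pp => //= z p IH x Sx /andP [rxz pz].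
exact: IH (cl _ _ Sx rxz) pz.
Qed.

Lemma index_last (x : T) s : uniq (x :: s) -> index (last x s) (x :: s) = size s.
Proof.
elim: s x => [|y s IH] x; first by rewrite /= eqxx.
rewrite cons_uniq => /andP [xn us].
rewrite [last _ _]/= -cat1s index_cat inE.
have -> : (last y s == x) = false.
  apply/negbTE; apply: contra xn => /eqP <-; exact: mem_last.
by rewrite IH.
Qed.


Lemma tri (r : rel T) A B C :
  chordless e -> symmetric e -> subrel r e ->
  e A B -> e A C -> e B C -> C != A -> C != B -> A != B -> ~~ r A B ->
  connect r A B -> r A C && r C B.
Proof.
move=> hch esym sub eAB eAC eBC CA CB AB nrAB /connectP [p pp Bl].
case/shortenP: pp Bl => p' pr' up' _ Bl.
case: p' pr' up' Bl => [|y [|z q]] pr' up' Bl.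
- by move: AB; rewrite Bl /= eqxx.
- by move: nrAB; rewrite Bl /=; move: pr' => /= /andP [->].
have pe : path e A (y :: z :: q) by apply: sub_path pr'.
have cyc : cycle e (A :: y :: z :: q).
  have eBA : e B A by rewrite esym.
  by rewrite /cycle rcons_path pe /=; move: eBA; rewrite Bl /= => ->.
have Bs : B \in (A :: y :: z :: q) by rewrite Bl mem_last.
have iB : index B (A :: y :: z :: q) = size (y :: z :: q) by rewrite Bl index_last.
have nA : next (A :: y :: z :: q) A = y by rewrite /next /= eqxx.
have nB : next (A :: y :: z :: q) B = A.
  rewrite next_nth Bs iB nth_default //.
have An : A \notin y :: z :: q by move: up'; rewrite cons_uniq => /andP [].
case Cs : (C \in (A :: y :: z :: q)).
- have [h1|h1] := hch (A :: y :: z :: q) up' isT cyc A C (mem_head _ _) Cs eAC.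
  + move: h1; rewrite nA => yC; subst y.
    have eCB : e C B by rewrite esym.
    have [h2|h2] := hch (A :: C :: z :: q) up' isT cyc C B Cs Bs eCB.
    * move: h2; rewrite next_nth Cs /= eq_sym (negbTE CA) eqxx /= => zB.
      by move: pr'; rewrite /= zB => /and3P [-> -> _].
    * by move: h2; rewrite nB => /eqP; rewrite eq_sym (negbTE CA).
  + exfalso; move: h1; rewrite next_nth Cs.
    case: (ltnP (index C (A :: y :: z :: q)) (size (y :: z :: q))) => hl.
    * move=> hA; move: An; rewrite -hA mem_nth //.
    * have hi : index C (A :: y :: z :: q) < size (A :: y :: z :: q) by rewrite index_mem.
      have eqi : index C (A :: y :: z :: q) = index B (A :: y :: z :: q).
        by rewrite iB; apply/eqP; rewrite eqn_leq hl andbT -ltnS.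
      by move: CB; rewrite -(nth_index A Cs) -(nth_index A Bs) eqi eqxx.
- have us' : uniq (rcons (A :: y :: z :: q) C) by rewrite rcons_uniq Cs.
  have cyc' : cycle e (rcons (A :: y :: z :: q) C).
    have eCA : e C A by rewrite esym.
    have : path e A (rcons (rcons (y :: z :: q) C) A).
      by rewrite !rcons_path pe last_rcons eCA andbT; move: eBC; rewrite Bl /= => ->.
    by [].
  have As' : A \in (rcons (A :: y :: z :: q) C) by rewrite mem_rcons inE mem_head orbT.
  have Bs' : B \in (rcons (A :: y :: z :: q) C) by rewrite mem_rcons inE Bs orbT.
  have [h|h] := hch _ us' isT cyc' A B As' Bs' eAB.
  + move: h; rewrite /next /= eqxx => yB; subst y.
    have Bn : B \notin z :: q by move: up'; rewrite cons_uniq => /andP [_]; rewrite cons_uniq => /andP [].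
    by move: Bn; rewrite {1}Bl /= mem_last.
  + move: h; rewrite next_nth Bs'.
    have -> : index B (rcons (A :: y :: z :: q) C) = size (y :: z :: q).
      by rewrite -cats1 index_cat Bs iB.
    rewrite rcons_cons nth_rcons ltnn eqxx => /eqP.
    by rewrite (negbTE CA).
Qed.


Lemma kchange_proper t a c d w :
  symmetric e -> proper_col e t a -> 1 <= c <= t -> 1 <= d <= t ->
  proper_col e t (kchange e a c d w).
Proof.
move=> esym [hr hs hd] hc hdd; split.
- move=> x y exy; rewrite /kchange; case: ifP => _; last exact: hr.
  by case: ifP.
- move=> x y exy; rewrite /kchange (hs x y exy).
  case H: ((a y x == c) || (a y x == d)); last by rewrite !andbF.
  rewrite !andbT.
  have kxy : kedge e a c d x y by rewrite /kedge exy (hs x y exy) H.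
  have kyx : kedge e a c d y x by rewrite /kedge -esym exy H.
  have -> : connect (kedge e a c d) w x = connect (kedge e a c d) w y.
    apply/idP/idP => h; [exact: connect_trans h (connect1 kxy) | exact: connect_trans h (connect1 kyx)].
  by [].
- move=> x y z exy exz yz; have H := hd x y z exy exz yz.
  rewrite /kchange; case: (connect _ w x) => /=; last by [].
  move: (a x y) (a x z) H => p q H.
  by case: (p =P c); case: (p =P d); case: (q =P c); case: (q =P d) => /=; lia.
Qed.

Lemma eq_edge_set (P Q : T -> T -> bool) :
  (forall x y, e x y -> P x y = Q x y) -> edge_set e P = edge_set e Q.
Proof.
move=> H; rewrite /edge_set.
have -> : [set p : T * T | e p.1 p.2 && P p.1 p.2] = [set p : T * T | e p.1 p.2 && Q p.1 p.2].
  apply/setP => p; rewrite !inE; case E: (e p.1 p.2) => //=; exact: H.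
by [].
Qed.

Lemma sub_edge_set (P Q : T -> T -> bool) :
  (forall x y, e x y -> P x y -> Q x y) -> edge_set e P \subset edge_set e Q.
Proof.
move=> H; rewrite /edge_set; apply: imsetS; apply/subsetP => p; rewrite !inE.
by case/andP => ep Pp; rewrite ep (H _ _ ep Pp).
Qed.


Lemma minimal_kstep g b a c d w :
  symmetric e -> minimal e g b a ->
  1 <= c <= (maxdeg e).+1 -> 1 <= d <= (maxdeg e).+1 -> c != d -> c != 1 -> d != 1 ->
  minimal e g b (kchange e a c d w).
Proof.
move=> esym [[pa ka] hm] hc hd cd c1 d1.
have E1 : forall x y, e x y -> (kchange e a c d w x y == 1) = (a x y == 1).
  move=> x y _; rewrite /kchange.
  by case: (connect _ w x) => /=; case: (a x y =P c); case: (a x y =P d) => /=; lia.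
have Eb : nbad e g (kchange e a c d w) = nbad e g a.
  by rewrite /nbad (@eq_edge_set _ (bad g a)) // => x y exy; rewrite /bad E1.
have Eu : nugly e g (kchange e a c d w) = nugly e g a.
  by rewrite /nugly (@eq_edge_set _ (ugly g a)) // => x y exy; rewrite /ugly E1.
split.
  split; first exact: kchange_proper.
  apply: kequiv_step ka _; exists c, d, w; split => //.
by move=> a' ha'; rewrite Eb Eu; exact: hm.
Qed.


Lemma lemA D g b a u v mu :
  symmetric e -> irreflexive e -> minimal e g b a -> proper_col e D g ->
  e u v -> ugly g a u v ->
  1 <= mu <= (maxdeg e).+1 -> mu != 1 -> missing e a u mu -> missing e a v mu -> False.
Proof.
move=> esym eirr hmin [_ gs _] euv hug hmu mu1 mu_u mu_v.
have [[pa ka] hm] := hmin.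
case: (pa) => [hr hs hd].
move: hug; rewrite /ugly => /andP [guv /eqP auv].
have avu : a v u = 1 by rewrite -hs.
have uv : u != v by apply: contraTneq euv => ->; rewrite eirr.
have Sc : forall x, connect (kedge e a 1 mu) u x -> (x == u) || (x == v).
  move=> x; apply: (connect_closed_in (S := fun z => (z == u) || (z == v))); last by rewrite eqxx.
  move=> x0 y0 /orP [] /eqP -> /andP [e0 /orP [] /eqP h].
  - apply/orP; right; apply/eqP; case: (y0 =P v) => // /eqP ny.
    by have := hd _ _ _ e0 euv ny; rewrite h auv eqxx.
  - by have := mu_u y0 e0; rewrite h eqxx.
  - apply/orP; left; apply/eqP; case: (y0 =P u) => // /eqP ny.
    have evu : e v u by rewrite esym.
    by have := hd _ _ _ e0 evu ny; rewrite h avu eqxx.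
  - by have := mu_v y0 e0; rewrite h eqxx.
have key : forall x y, e x y -> kchange e a 1 mu u x y =
    if ((x == u) && (y == v)) || ((x == v) && (y == u)) then mu else a x y.
  move=> x y exy; rewrite /kchange.
  case Cx: (connect _ u x); last first.
    have xu : x != u by apply: contraFneq Cx => ->; exact: connect0.
    have xv : x != v.
      apply: contraFneq Cx => ->; apply: connect1; by rewrite /kedge euv auv eqxx.
    by rewrite (negbTE xu) (negbTE xv).
  have := Sc x Cx; case/orP => /eqP ?; subst x.
  - rewrite eqxx (negbTE uv) /= orbF (negbTE (mu_u y exy)) orbF.
    case: (y =P v) => [->|nyv]; first by rewrite auv eqxx.
    have := hd _ _ _ exy euv (introN eqP nyv); rewrite auv => /negbTE -> //.
  - have evu : e v u by rewrite esym.
    rewrite eqxx [v == u]eq_sym (negbTE uv) /= (negbTE (mu_v y exy)) orbF.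
    case: (y =P u) => [->|nyu]; first by rewrite avu eqxx.
    have := hd _ _ _ exy evu (introN eqP nyu); rewrite avu => /negbTE -> //.
have Eb : nbad e g (kchange e a 1 mu u) = nbad e g a.
  rewrite /nbad (@eq_edge_set _ (bad g a)) // => x y exy; rewrite /bad key //.
  case: ifP => // /orP [] /andP [/eqP -> /eqP ->]; first by rewrite (negbTE guv).
  by rewrite -gs // (negbTE guv).
have Su : edge_set e (ugly g (kchange e a 1 mu u)) \proper edge_set e (ugly g a).
  apply/properP; split.
    apply: sub_edge_set => x y exy; rewrite /ugly key //; case: ifP => // _.
    by rewrite (negbTE mu1) andbF.
  exists [set u; v].
    by apply/imsetP; exists (u, v) => //; rewrite inE /= euv /ugly guv auv eqxx.
  apply/imsetP => [[[x y]]]; rewrite inE /= => /andP [exy ugxy] heq.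
  have xin : x \in [set u; v] by rewrite heq !inE eqxx.
  have yin : y \in [set u; v] by rewrite heq !inE eqxx orbT.
  move: ugxy; rewrite /ugly key //.
  rewrite !inE in xin yin.
  case/orP: xin => /eqP ?; case/orP: yin => /eqP ?; subst; rewrite ?eirr // in exy;
    by rewrite !eqxx ?orbT /= (negbTE mu1) andbF.
have hC : inC e b (kchange e a 1 mu u).
  split; first by apply: kchange_proper.
  apply: kequiv_step ka _; exists 1, mu, u; split => //; by rewrite eq_sym.
case: (hm _ hC) => _ /(_ Eb).
have := proper_card Su; rewrite /nugly; lia.
Qed.


Lemma lemB D g b a u v x mu dl :
  symmetric e -> irreflexive e -> chordless e -> minimal e g b a -> proper_col e D g ->
  e u v -> ugly g a u v -> e u x -> e v x -> x != u -> x != v ->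
  1 <= mu <= (maxdeg e).+1 -> mu != 1 -> 1 <= dl <= (maxdeg e).+1 -> dl != 1 -> mu != dl ->
  missing e a u mu -> missing e a v dl ->
  kedge e a mu dl v x && kedge e a mu dl x u.
Proof.
move=> esym eirr hch hmin hg euv hug eux evx xu xv hmu mu1 hdl dl1 mudl mu_u dl_v.
have [[pa ka] hm] := hmin.
case: (pa) => [hr hs hd].
have auv : a u v = 1 by case/andP: hug => _ /eqP.
have avu : a v u = 1 by rewrite -hs.
have vu : v != u by apply: contraTneq euv => ->; rewrite eirr.
have evu : e v u by rewrite esym.
have Conn : connect (kedge e a mu dl) v u.
  apply/negPn/negP => nc.
  have m1 := minimal_kstep v esym hmin hmu hdl mudl mu1 dl1.
  apply: (lemA esym eirr m1 hg euv _ hmu mu1).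
  - by rewrite /ugly /kchange (negbTE nc) /=.
  - by move=> y euy; rewrite /kchange (negbTE nc) /=; exact: mu_u.
  - move=> y evy; rewrite /kchange connect0 /=; have := dl_v y evy.
    by case: (a v y =P mu); case: (a v y =P dl) => /=; lia.
apply: (tri hch esym _ evu evx eux xv xu vu _ Conn).
  by move=> p q /andP [].
by rewrite /kedge evu avu /= eq_sym (negbTE mu1) eq_sym (negbTE dl1).
Qed.

End Helpers.

Lemma three_distinct (D p q r : nat) : 1 <= p <= D -> 1 <= q <= D -> 1 <= r <= D ->
  p != q -> p != r -> q != r -> 3 <= D.
Proof. lia. Qed.

Lemma pick_k (mu dl D : nat) : 3 <= D ->
  exists k, [/\ 1 <= k <= D.+1, k != 1, k != mu & k != dl].
Proof.
move=> hD.
case: (eqVneq mu 2) => h1; case: (eqVneq dl 2) => h2.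
- exists 3; split; lia.
- case: (eqVneq dl 3) => h3; [exists 4 | exists 3]; split; lia.
- case: (eqVneq mu 3) => h3; [exists 4 | exists 3]; split; lia.
- exists 2; split; lia.
Qed.

Lemma miss_aux1 (p k mu : nat) : k != mu -> p != mu ->
  (if (p == k) || (p == mu) then (if p == k then mu else k) else p) != k.
Proof. by case: (p =P k); case: (p =P mu) => /=; lia. Qed.

Lemma miss_aux2 (b : bool) (p k mu dl : nat) : k != dl -> mu != dl -> p != dl ->
  (if b && ((p == k) || (p == mu)) then (if p == k then mu else k) else p) != dl.
Proof. by case: b; case: (p =P k); case: (p =P mu) => /=; lia. Qed.

Theorem mainTheorem6 (T : finType) (e : rel T)
  (e_sym : symmetric e) (e_irr : irreflexive e)
  (hchordless : chordless e) (hclass1 : class1 e)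
  (g b : T -> T -> nat)
  (hg : proper_col e (maxdeg e) g) (hb : proper_col e (maxdeg e).+1 b)
  (a : T -> T -> nat) (m : T -> nat)
  (hmin : minimal e g b a) (hm : good_missing e (maxdeg e).+1 a m)
  (u v : T) (huv : e u v) (hugly : ugly g a u v)
  (xs : seq T) (hfan : is_fan e a m u v xs) (hp : 2 <= size xs) :
  ~~ e v (last v xs).
Proof.
have [[pa ka] hm0] := hmin.
case: (pa) => [hr hs hd].
case: (hg) => [gr gs gd].
case: hfan => [[hsz hh hun hall] _].
case: xs hsz hh hun hall hp => [|v' [|y ys]] // hsz hh hun hall hp.
rewrite /= in hh; subst v'.
rewrite [last _ _]/=.
set x := last y ys.
have xin : x \in y :: ys by exact: mem_last.
have eux : e u x by apply: (allP hall); rewrite inE xin orbT.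
have vn : v \notin y :: ys by move: hun; rewrite cons_uniq => /andP [].
have xv : x != v by apply: contraNneq vn => <-.
have xu : x != u by apply: contraTneq eux => ->; rewrite e_irr.
have uv : u != v by apply: contraTneq huv => ->; rewrite e_irr.
apply/negP => evx.
have evu : e v u by rewrite e_sym.
have exu : e x u by rewrite e_sym.
have exv : e x v by rewrite e_sym.
have auv : a u v = 1 by case/andP: hugly => _ /eqP.
have avu : a v u = 1 by rewrite -hs.
have guv : g u v != 1 by case/andP: hugly.
case: (hm u) => hmu mu_u [mu1' _].
case: (hm v) => hdl dl_v [dl1' _].
have mu1 : m u != 1.
  apply/eqP => h; have [h1 _] := mu1' h; by have := h1 v huv; rewrite auv.
have dl1 : m v != 1.
  apply/eqP => h; have [h1 _] := dl1' h; by have := h1 u evu; rewrite avu.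
have mudl : m u != m v.
  apply/negP => /eqP h; apply: (lemA e_sym e_irr hmin hg huv hugly hmu mu1 mu_u).
  by rewrite h.
have := lemB e_sym e_irr hchordless hmin hg huv hugly eux evx xu xv hmu mu1 hdl dl1 mudl mu_u dl_v.
rewrite /kedge evx exu /= => /andP [h1 h2].
have avx : a v x = m u.
  case/orP: h1 => /eqP // h; by have := dl_v x evx; rewrite h eqxx.
have aux : a u x = m v.
  rewrite hs //; case/orP: h2 => /eqP // h; by have := mu_u x eux; rewrite hs // h eqxx.
have D3 : 3 <= maxdeg e.
  have := gr u v huv; have := gr u x eux; have := gr v x evx.
  have vx : v != x by rewrite eq_sym.
  have ux : u != x by rewrite eq_sym.
  have := gd u v x huv eux vx.
  have := gd v u x evu evx ux.
  have := gd x u v exu exv uv.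
  rewrite -(gs u v huv) -(gs u x eux) -(gs v x evx).
  move=> h1' h2' h3' r1 r2 r3; exact: three_distinct r3 r2 r1 h3' h2' h1'.
have [k [hk k1 kmu kdl]] := pick_k (m u) (m v) D3.
have m1 := minimal_kstep u e_sym hmin hk hmu kmu k1 mu1.
have hug1 : ugly g (kchange e a k (m u) u) u v.
  rewrite /ugly /kchange auv.
  have -> : (1 == k) = false by apply/negbTE; rewrite eq_sym.
  have -> : (1 == m u) = false by apply/negbTE; rewrite eq_sym.
  by rewrite andbF guv.
have k_u : missing e (kchange e a k (m u) u) u k.
  move=> z euz; rewrite /kchange connect0 /=; have := mu_u z euz.
  exact: miss_aux1.
have dl_v1 : missing e (kchange e a k (m u) u) v (m v).
  move=> z evz; rewrite /kchange; have := dl_v z evz.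
  exact: miss_aux2.
have := lemB e_sym e_irr hchordless m1 hg huv hug1 eux evx xu xv hk k1 hdl dl1 kdl k_u dl_v1.
rewrite /kedge evx /= => /andP [hh1 _].
move: hh1; rewrite /kchange.
case Cuv : (connect (kedge e a k (m u)) u v).
  have sub : subrel (kedge e a k (m u)) e by move=> p q /andP [].
  have nk : ~~ kedge e a k (m u) u v.
    rewrite /kedge huv auv /=.
    have -> : (1 == k) = false by apply/negbTE; rewrite eq_sym.
    by rewrite eq_sym.
  have := tri hchordless e_sym sub huv eux evx xu xv uv nk Cuv.
  rewrite /kedge eux aux /=.
  have -> : (m v == k) = false by apply/negbTE; rewrite eq_sym.
  by rewrite eq_sym (negbTE mudl).
rewrite /= avx.
have -> : (m u == k) = false by apply/negbTE; rewrite eq_sym.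
by rewrite /= (negbTE mudl).
Qed.
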